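(* Let $3\le h\le n-1$ and let $G$ be a connected graph $D$-cospectral to $K^{h}_{n}$. Then $G$ contains no induced subgraph isomorphic to any of the graphs $C_4$, $C_5$, $H_1$, $H_4$, $H_9$, $H_{10}$, $H_{11}$, $H_{12}$, $H_{13}$, where: $H_1$ is the path $a\!-\!b\!-\!c\!-\!d$ together with a vertex $e$ adjacent to all of $a,b,c,d$; $H_4$ has vertices $a,b,c,d,e$ and edges $ab,bc,ad,bd,be,de$ (a $K_4$ minus an edge, with a pendant vertex $c$ attached to one of its two vertices of degree $3$); $H_9$ is $K_2\vee P_3$ (an edge whose two ends are both joined to every vertex of a path on $3$ vertices); $H_{10}$ is $K_2\vee \overline{K_3}$ (an edge whose two ends are both joined to each of $3$ pairwise non-adjacent vertices); $H_{11}$ is $K_5$ together with one extra vertex adjacent to exactly two vertices of the $K_5$; $H_{12}$ is $K_2\vee 2K_2$ (an edge whose two ends are both joined to every vertex of two disjoint edges); $H_{13}$ consists of two triangles sharing exactly one vertex $b$, together with a pendant vertex adjacent to $b$.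
   Context: For a connected graph $G$, the distance matrix $D(G)$ has as $(i,j)$-entry the distance between the $i$-th and $j$-th vertices; two graphs are $D$-cospectral if their distance matrices have the same spectrum. $K^{h}_{n}$ denotes the graph on $n$ vertices obtained from $K_h$ by attaching $n-h$ pendant edges to one vertex of $K_h$. $G_1\vee G_2$ denotes the join (complete product) of $G_1$ and $G_2$; $\overline{K_3}$ is the edgeless graph on $3$ vertices; $2K_2$ is two disjoint edges. *)

(* Defs.v *)
From mathcomp Require Import all_boot all_order all_algebra algC.
Set Implicit Arguments. Unset Strict Implicit. Unset Printing Implicit Defensive.
Import GRing.Theory Num.Theory.

Definition simple_graph (n : nat) (g : rel 'I_n) : Prop :=
  symmetric g /\ irreflexive g.

Definition connected_graph (n : nat) (g : rel 'I_n) : Prop :=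
  forall x y, connect g x y.

Fixpoint ball (n : nat) (g : rel 'I_n) (k : nat) (x : 'I_n) : {set 'I_n} :=
  if k is k'.+1 then
    ball g k' x :|: [set y | [exists z in ball g k' x, g z y]]
  else [set x].

(* graph distance: least k with y in ball k x (meaningful for connected g) *)
Definition gdist (n : nat) (g : rel 'I_n) (x y : 'I_n) : nat :=
  find (fun k => y \in ball g k x) (iota 0 n).

Definition distmx (n : nat) (g : rel 'I_n) : 'M[algC]_n :=
  \matrix_(i, j) ((gdist g i j)%:R)%R.

(* D-cospectral: distance matrices have the same spectrum (with multiplicity),
   i.e. the same characteristic polynomial over the algebraically closed algC. *)
Definition D_cospectral (n : nat) (g1 g2 : rel 'I_n) : Prop :=
  char_poly (distmx g1) = char_poly (distmx g2).

(* K^h_n : clique on vertices 0..h-1, vertices h..n-1 pendant at vertex 0 *)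
Definition Khn (n h : nat) : rel 'I_n :=
  fun i j => (i != j) && ((((i : nat) < h) && ((j : nat) < h)) || ((i : nat) == 0) || ((j : nat) == 0)).

Definition mkgraph (k : nat) (es : seq (nat * nat)) : rel 'I_k :=
  fun i j => ((i : nat, j : nat) \in es) || ((j : nat, i : nat) \in es).

Definition induced_sub (k n : nat) (H : rel 'I_k) (g : rel 'I_n) : Prop :=
  exists f : 'I_k -> 'I_n, injective f /\ forall a b, g (f a) (f b) = H a b.

Definition C4 : rel 'I_4 := @mkgraph 4 [:: (0,1); (1,2); (2,3); (3,0)].
Definition C5 : rel 'I_5 := @mkgraph 5 [:: (0,1); (1,2); (2,3); (3,4); (4,0)].
(* a=0,b=1,c=2,d=3,e=4 *)
Definition H1 : rel 'I_5 :=
  @mkgraph 5 [:: (0,1); (1,2); (2,3); (4,0); (4,1); (4,2); (4,3)].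
Definition H4 : rel 'I_5 :=
  @mkgraph 5 [:: (0,1); (1,2); (0,3); (1,3); (1,4); (3,4)].
(* K2 = {0,1}, P3 = 2-3-4 *)
Definition H9 : rel 'I_5 :=
  @mkgraph 5 [:: (0,1); (2,3); (3,4); (0,2); (0,3); (0,4); (1,2); (1,3); (1,4)].
(* K2 = {0,1}, independent {2,3,4} *)
Definition H10 : rel 'I_5 :=
  @mkgraph 5 [:: (0,1); (0,2); (0,3); (0,4); (1,2); (1,3); (1,4)].
(* K5 on 0..4, vertex 5 adjacent to 0 and 1 *)
Definition H11 : rel 'I_6 :=
  @mkgraph 6 [:: (0,1); (0,2); (0,3); (0,4); (1,2); (1,3); (1,4); (2,3); (2,4); (3,4);
                (5,0); (5,1)].
(* K2 = {0,1}, 2K2 = {2,3},{4,5} *)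
Definition H12 : rel 'I_6 :=
  @mkgraph 6 [:: (0,1); (2,3); (4,5); (0,2); (0,3); (0,4); (0,5);
                (1,2); (1,3); (1,4); (1,5)].
(* b = 0; triangles 0-1-2 and 0-3-4; pendant 5 at 0 *)
Definition H13 : rel 'I_6 :=
  @mkgraph 6 [:: (0,1); (1,2); (2,0); (0,3); (3,4); (4,0); (0,5)].

(* Main.v *)
Require Import Defs.
From mathcomp Require Import all_boot all_order all_algebra algC.
From mathcomp Require Import spectral sesquilinear ring zify.
Set Implicit Arguments. Unset Strict Implicit. Unset Printing Implicit Defensive.

Section Ball.
Variables (n : nat) (g : rel 'I_n).

Lemma ball_le k l x : k <= l -> ball g k x \subset ball g l x.
Proof.
elim: l => [|l IH]; first by rewrite leqn0 => /eqP ->.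
rewrite leq_eqVlt => /orP [/eqP -> //| ]; rewrite ltnS => /IH s.
by apply: subset_trans s _; rewrite /= subsetUl.
Qed.

Lemma in_ballS k x y : (y \in ball g k.+1 x) = (y \in ball g k x) || [exists z in ball g k x, g z y].
Proof. by rewrite /= !inE. Qed.

Lemma ball_path k x y :
  y \in ball g k x <-> exists s, [/\ size s <= k, path g x s & last x s = y].
Proof.
split.
  elim: k y => [|k IH] y; first by rewrite /= inE => /eqP ->; exists [::].
  rewrite in_ballS => /orP [/IH [s [s1 s2 s3]] | /existsP [z /andP [zb gz]]].
    by exists s; split => //; apply: leqW.
  have [s [s1 s2 s3]] := IH _ zb; exists (rcons s y); split.
  - by rewrite size_rcons.
  - by rewrite rcons_path s2 s3.
  - by rewrite last_rcons.
elim: k y => [|k IH] y [s []].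
  by rewrite leqn0 => /nilP -> _ /= ->; rewrite inE.
case/lastP: s => [|s z]; first by move=> _ _ /= <-; apply: (subsetP (ball_le x (leq0n k.+1))); rewrite inE.
rewrite size_rcons ltnS rcons_path last_rcons => s1 /andP [s2 s3] <-.
rewrite in_ballS; apply/orP; right; apply/existsP; exists (last x s).
by rewrite s3 andbT; apply: IH; exists s.
Qed.

Lemma ball_sym (gs : symmetric g) k x y : y \in ball g k x -> x \in ball g k y.
Proof.
case/ball_path => s [s1 s2 s3]; apply/ball_path.
exists (rev (belast x s)); split.
- by rewrite size_rev size_belast.
- by rewrite -s3 rev_path (@eq_path _ _ g) // => a b /=; exact: gs.
- rewrite -s3; case: s {s1 s2 s3} => [|a s] //=.
  by rewrite rev_cons last_rcons.
Qed.

Lemma gdist_sym (gs : symmetric g) x y : gdist g x y = gdist g y x.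
Proof.
rewrite /gdist; apply: eq_find => k.
by apply/idP/idP => /ball_sym; apply.
Qed.

Lemma gdist_eq k x y : k < n -> y \in ball g k x ->
  (forall j, j < k -> y \notin ball g j x) -> gdist g x y = k.
Proof.
move=> kn yk lt; rewrite /gdist.
have -> : iota 0 n = iota 0 k ++ iota k (n - k).
  by rewrite -iotaD subnKC // ltnW.
rewrite find_cat.
have -> : has (fun j => y \in ball g j x) (iota 0 k) = false.
  apply/hasP => [[j]]; rewrite mem_iota add0n => /andP [_ jk]; apply/negP.
  exact: lt.
rewrite size_iota; have -> : n - k = (n - k).-1.+1 by lia.
by rewrite /= yk addn0.
Qed.

Lemma in_ball1 x y : (y \in ball g 1 x) = (y == x) || g x y.
Proof.
rewrite in_ballS /= inE; congr (_ || _); apply/existsP/idP => [[z]|gxy].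
  by rewrite inE => /andP [/eqP -> ].
by exists x; rewrite inE eqxx.
Qed.

Lemma gdist0 x : gdist g x x = 0.
Proof.
apply: gdist_eq => //; last by rewrite /= inE.
by case: x => x xn /=; apply: leq_ltn_trans xn.
Qed.

Lemma gdist1 x y : x != y -> g x y -> gdist g x y = 1.
Proof.
move=> xy gxy; apply: gdist_eq.
- case: x y xy {gxy} => [x xn] [y yn] /=; rewrite -val_eqE /=; lia.
- by rewrite in_ball1 gxy orbT.
- by move=> j; rewrite ltnS leqn0 => /eqP ->; rewrite /= inE eq_sym.
Qed.

Lemma gdist2 x y z : 2 < n -> x != y -> ~~ g x y -> g x z -> g z y -> gdist g x y = 2.
Proof.
move=> n2 xy gxy gxz gzy; apply: gdist_eq => //.
- rewrite in_ballS; apply/orP; right; apply/existsP; exists z.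
  by rewrite gzy andbT in_ball1 gxz orbT.
- move=> j j2; apply: contraNN (_ : y \notin ball g 1 x).
    by apply: (subsetP (ball_le x _)); lia.
  by rewrite in_ball1 negb_or eq_sym xy.
Qed.

End Ball.

Import Order.TTheory GRing.Theory Num.Theory.
Local Open Scope ring_scope.
Local Open Scope sesquilinear_scope.

Section QF.
Variable n : nat.

Definition qf (A : 'M[algC]_n) (x : 'rV[algC]_n) : algC := (x *m A *m x ^t*) 0 0.

Lemma qfE A x : qf A x = \sum_i \sum_j x 0 i * A i j * (x 0 j)^*.
Proof.
rewrite /qf !mxE exchange_big; apply: eq_bigr => j _.
rewrite [(x ^t*) _ _]mxE [(x *m A) 0 j]mxE mulr_suml; apply: eq_bigr => i _.
by rewrite [x^T _ _]mxE.
Qed.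

End QF.

Lemma qf_mul n m A (z : 'rV[algC]_m) (V : 'M_(m, n)) :
  qf A (z *m V) = qf (V *m A *m V ^t*) z.
Proof. by rewrite /qf trmx_mul map_mxM !mulmxA. Qed.

Lemma qf_diag m (v : 'rV[algC]_m) z : qf (diag_mx v) z = \sum_k v 0 k * (z 0 k * (z 0 k)^*).
Proof.
rewrite qfE; apply: eq_bigr => i _; rewrite (bigD1 i) //= big1 ?addr0.
  by rewrite !mxE eqxx mulr1n mulrCA mulrA.
by move=> j /negbTE ji; rewrite !mxE eq_sym ji mulr0n mulr0 mul0r.
Qed.

Lemma cap_nonzero n p1 p2 (U1 : 'M[algC]_(p1,n)) (U2 : 'M[algC]_(p2,n)) :
  (n < \rank U1 + \rank U2)%N ->
  exists x : 'rV_n, [/\ x != 0, (x <= U1)%MS & (x <= U2)%MS].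
Proof.
move=> lt; have : (U1 :&: U2)%MS != 0.
  rewrite -mxrank_eq0 -lt0n; move: lt; rewrite -mxrank_sum_cap.
  have := rank_leq_col (U1 + U2)%MS; lia.
case/rowV0Pn => v vC v0; exists v; split => //.
  exact: submx_trans vC (capmxSl _ _).
exact: submx_trans vC (capmxSr _ _).
Qed.

Lemma trC_mul m1 m2 m3 (X : 'M[algC]_(m1, m2)) (Y : 'M[algC]_(m2, m3)) :
  (X *m Y)^t* = Y^t* *m X^t*.
Proof. by rewrite trmx_mul map_mxM. Qed.

Section Eig.
Variables (n : nat) (A : 'M[algC]_n).
Hypothesis HA : A \is hermsymmx.
Let P := spectralmx A.
Let d := spectral_diag A.

Lemma PU : P \is unitarymx. Proof. exact: spectral_unitarymx. Qed.

Lemma decomp (a b : algC) :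
  a *: A + b%:M = P^t* *m diag_mx (\row_i (a * d 0 i + b)) *m P.
Proof.
have /orthomx_spectralP eA := hermitian_normalmx HA.
rewrite -/P -/d invmx_unitary ?PU // in eA.
have -> : diag_mx (\row_i (a * d 0 i + b)) = a *: diag_mx d + b%:M.
  apply/matrixP => i j; rewrite !mxE; by case: (i == j); rewrite ?mulr1n ?mulr0n ?mulr0 ?addr0.
rewrite mulmxDr mulmxDl -scalemxAr -scalemxAl -eA; congr (_ + _).
by rewrite mul_mx_scalar -scalemxAl -[P^t*]mul1mx mulmxKtV ?PU // scalemx1.
Qed.

Lemma RdiagR m (f : 'I_m -> 'I_n) (finj : injective f) (e : 'rV[algC]_n) :
  let R := \matrix_(k, j) ((f k == j)%:R : algC) in
  R *m diag_mx e *m R^t* = diag_mx (\row_k e 0 (f k)).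
Proof.
move=> R; apply/matrixP => k l; rewrite mul_mx_diag !mxE (bigD1 (f k)) //= big1 ?addr0.
  rewrite !mxE eqxx mul1r (inj_eq finj) eq_sym.
  by case: (k == l); rewrite ?mulr1n ?mulr0n ?conjC1 ?conjC0 ?mulr1 ?mulr0.
by move=> j /negbTE jf; rewrite !mxE eq_sym jf mul0r mul0r.
Qed.

Lemma eig_space (S : {set 'I_n}) (a b : algC) :
  exists U : 'M[algC]_(#|S|, n), \rank U = #|S| /\
    forall z, qf (a *: A + b%:M) (z *m U) =
              \sum_k (a * d 0 (enum_val k) + b) * (z 0 k * (z 0 k)^*).
Proof.
pose f := (@enum_val _ (mem S)).
have finj : injective f by exact: enum_val_inj.
pose R := \matrix_(k, j) ((f k == j)%:R : algC).
exists (R *m P); split.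
  apply: mxrank_unitary; apply/unitarymxP.
  rewrite trC_mul mulmxA mulmxtVK ?PU //.
  by rewrite -[R in R *m _]mulmx1 -diag_const_mx RdiagR // -diag_const_mx;
     congr diag_mx; apply/rowP => k; rewrite !mxE.
move=> z; rewrite decomp qf_mul.
rewrite trC_mul !mulmxA !mulmxtVK ?PU //.
by rewrite RdiagR // qf_diag; apply: eq_bigr => k _; rewrite !mxE.
Qed.

Lemma count_weak (a b : algC) (S : {set 'I_n}) q (U : 'M[algC]_(q, n)) :
  (forall i, i \in S -> 0 < a * d 0 i + b) ->
  (forall x, (x <= U)%MS -> qf (a *: A + b%:M) x <= 0) ->
  (#|S| + \rank U <= n)%N.
Proof.
move=> hS hU; rewrite leqNgt; apply/negP => lt.
have [U1 [rU1 qU1]] := eig_space S a b.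
have [x [x0 xU1 xU]] : exists x : 'rV_n, [/\ x != 0, (x <= U1)%MS & (x <= U)%MS].
  by apply: cap_nonzero; rewrite rU1.
case/submxP: xU1 => z ez.
have z0 : z != 0 by apply/eqP => z0; move: x0; rewrite ez z0 mul0mx eqxx.
have h1 := hU x xU; rewrite ez qU1 in h1.
suff h2 : 0 < \sum_k (a * d 0 (enum_val k) + b) * (z 0 k * (z 0 k)^*).
  by have := lt_le_trans h2 h1; rewrite ltxx.
have [k zk] : exists k, z 0 k != 0.
  apply/existsP; apply: contraNT z0; rewrite negb_exists => /forallP h.
  by apply/eqP/rowP => k; rewrite mxE; apply/eqP; have := h k; rewrite negbK.
rewrite (bigD1 k) //=; apply: ltr_wpDr.
  apply: sumr_ge0 => i _; apply: mulr_ge0; last exact: mul_conjC_ge0.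
  exact/ltW/hS/enum_valP.
by apply: mulr_gt0; [exact/hS/enum_valP | rewrite mul_conjC_gt0].
Qed.

Lemma count_strict (a b : algC) (S : {set 'I_n}) q (U : 'M[algC]_(q, n)) :
  (forall i, i \in S -> a * d 0 i + b <= 0) ->
  (forall x, x != 0 -> (x <= U)%MS -> 0 < qf (a *: A + b%:M) x) ->
  (#|S| + \rank U <= n)%N.
Proof.
move=> hS hU; rewrite leqNgt; apply/negP => lt.
have [U1 [rU1 qU1]] := eig_space S a b.
have [x [x0 xU1 xU]] : exists x : 'rV_n, [/\ x != 0, (x <= U1)%MS & (x <= U)%MS].
  by apply: cap_nonzero; rewrite rU1.
case/submxP: xU1 => z ez.
have h1 := hU x x0 xU; rewrite ez qU1 in h1.
suff h2 : \sum_k (a * d 0 (enum_val k) + b) * (z 0 k * (z 0 k)^*) <= 0.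
  by have := lt_le_trans h1 h2; rewrite ltxx.
rewrite -oppr_ge0 -sumrN; apply: sumr_ge0 => k _; rewrite -mulNr.
apply: mulr_ge0; last exact: mul_conjC_ge0.
by rewrite oppr_ge0; apply/hS/enum_valP.
Qed.

End Eig.

Lemma det_conj2 (R : comUnitRingType) n (Q Z : 'M[R]_n) (c : R) :
  Q \in unitmx -> \det (c%:M - invmx Q *m Z *m Q) = \det (c%:M - Z).
Proof.
move=> Qu.
have e : c%:M - invmx Q *m Z *m Q = invmx Q *m (c%:M - Z) *m Q.
  rewrite mulmxBr mulmxBl; congr (_ - _).
  by rewrite -mulmxA -scalar_mxC mulmxA mulVmx // mul1mx.
by rewrite e !det_mulmx mulrC mulrA -det_mulmx mulmxV // det1 mul1r.
Qed.

Lemma char_poly_sim n (P X : 'M[algC]_n) : P \in unitmx ->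
  char_poly (invmx P *m X *m P) = char_poly X.
Proof.
move=> Pu; rewrite /char_poly /char_poly_mx !map_mxM map_invmx.
by apply: det_conj2; rewrite map_unitmx.
Qed.

Lemma char_poly_herm n (A : 'M[algC]_n) : A \is hermsymmx ->
  char_poly A = \prod_(i < n) ('X - (spectral_diag A 0 i)%:P).
Proof.
move=> HA; have /orthomx_spectralP eA := hermitian_normalmx HA.
rewrite {1}eA char_poly_sim ?spectral_unit // char_poly_trig ?diag_mx_is_trig //.
by apply: eq_bigr => i _; rewrite mxE eqxx mulr1n.
Qed.

Lemma card_count n (e : 'rV[algC]_n) (Pr : pred algC) :
  #|[set i | Pr (e 0 i)]| = count Pr [seq e 0 i | i <- index_enum 'I_n].
Proof.
rewrite cardsE cardE count_map /enum_mem size_filter; apply: eq_count => i.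
by [].
Qed.

Lemma transfer n (A B : 'M[algC]_n) (Pr : pred algC) :
  A \is hermsymmx -> B \is hermsymmx -> char_poly A = char_poly B ->
  #|[set i | Pr (spectral_diag A 0 i)]| = #|[set i | Pr (spectral_diag B 0 i)]|.
Proof.
move=> HA HB; rewrite !char_poly_herm // => eq.
rewrite !card_count; apply/permP/prod_XsubC_eq.
by rewrite !big_map.
Qed.

Definition dHnat k (H : rel 'I_k) (a b : 'I_k) : nat :=
  if a == b then 0 else if H a b then 1 else 2.

Definition DH k (H : rel 'I_k) : 'M[algC]_k := \matrix_(a, b) (dHnat H a b)%:R.

Definition mkV p k (t : seq (seq int)) : 'M[algC]_(p, k) :=
  \matrix_(i, j) (nth 0 (nth [::] t i) j)%:~R.

Lemma mkV_real p k t : (mkV p k t)^t* = (mkV p k t)^T.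
Proof. by apply/matrixP => i j; rewrite !mxE conj_intr. Qed.

Definition mk2 (es : seq (nat * nat)) (i j : nat) := ((i, j) \in es) || ((j, i) \in es).

Lemma diam_mk k es :
  all (fun a => all (fun b => (a == b) || mk2 es a b ||
        has (fun c => mk2 es a c && mk2 es c b) (iota 0 k)) (iota 0 k)) (iota 0 k) ->
  forall a b : 'I_k, a != b -> ~~ mkgraph es a b -> exists c : 'I_k, mkgraph es a c && mkgraph es c b.
Proof.
move=> /allP h a b ab nab.
have ha : (a : nat) \in iota 0 k by rewrite mem_iota /=.
have hb : (b : nat) \in iota 0 k by rewrite mem_iota /=.
have /allP /(_ b hb) := h a ha.
rewrite -[mk2 es a b]/(mkgraph es a b) (negbTE nab) orbF.
have -> : ((a : nat) == b) = false by apply/negbTE.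
move=> /hasP [c]; rewrite mem_iota /= => cl hc.
by exists (Ordinal cl).
Qed.

Lemma diag_pos p (s : 'rV[algC]_p) z : (forall k, 0 < s 0 k) -> z != 0 -> 0 < qf (diag_mx s) z.
Proof.
move=> hs z0; rewrite qf_diag.
have [k zk] : exists k, z 0 k != 0.
  apply/existsP; apply: contraNT z0; rewrite negb_exists => /forallP h.
  by apply/eqP/rowP => k; rewrite mxE; apply/eqP; have := h k; rewrite negbK.
rewrite (bigD1 k) //=; apply: ltr_wpDr.
  by apply: sumr_ge0 => i _; apply: mulr_ge0; [exact/ltW/hs | exact: mul_conjC_ge0].
by apply: mulr_gt0; [exact: hs | rewrite mul_conjC_gt0].
Qed.

Lemma H_side p k (V : 'M[algC]_(p, k)) M (s : 'rV[algC]_p) :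
  V^t* = V^T -> V *m M *m V^T = diag_mx s -> (forall i, 0 < s 0 i) ->
  forall z, z != 0 -> 0 < qf M (z *m V).
Proof. by move=> VR e hs z z0; rewrite qf_mul VR e; exact: diag_pos. Qed.

Section Embed.
Variables (n k : nat) (g : rel 'I_n) (H : rel 'I_k) (f : 'I_k -> 'I_n).
Hypotheses (gs : simple_graph g) (n2 : (2 < n)%N) (finj : injective f)
  (fH : forall a b, g (f a) (f b) = H a b)
  (diam : forall a b, a != b -> ~~ H a b -> exists c, H a c && H c b).

Let F := \matrix_(a, j) ((f a == j)%:R : algC).

Lemma FAF (A : 'M[algC]_n) : F *m A *m F^t* = \matrix_(a, b) A (f a) (f b).
Proof.
apply/matrixP => a b; rewrite !mxE (bigD1 (f b)) //= big1 ?addr0.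
  rewrite !mxE eqxx conjC1 mulr1 (bigD1 (f a)) //= big1 ?addr0.
    by rewrite !mxE eqxx mul1r.
  by move=> i /negbTE ia; rewrite !mxE eq_sym ia mul0r.
by move=> j /negbTE jb; rewrite !mxE eq_sym jb conjC0 mulr0.
Qed.

Lemma embed_dist a b : distmx g (f a) (f b) = DH H a b.
Proof.
rewrite !mxE /dHnat; case: eqP => [-> | /eqP ab]; first by rewrite gdist0.
have fab : f a != f b by rewrite (inj_eq finj).
case hab: (H a b); first by rewrite gdist1 // fH.
have [c /andP [hac hcb]] := diam ab (negbT hab).
by rewrite (@gdist2 _ _ _ _ (f c)) // ?fH ?hab.
Qed.

Lemma G_side p (c1 c0 : algC) (V : 'M[algC]_(p, k)) :
  (forall z, z != 0 -> 0 < qf (c1 *: DH H + c0%:M) (z *m V)) ->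
  exists U : 'M[algC]_(p, n), \rank U = p /\
    forall x, x != 0 -> (x <= U)%MS -> 0 < qf (c1 *: distmx g + c0%:M) x.
Proof.
move=> hV.
have key z : qf (c1 *: distmx g + c0%:M) (z *m (V *m F)) = qf (c1 *: DH H + c0%:M) (z *m V).
  rewrite mulmxA qf_mul FAF; congr qf; apply/matrixP => a b; rewrite !mxE.
  by have := embed_dist a b; rewrite !mxE => ->; rewrite (inj_eq finj).
exists (V *m F); split.
  apply/eqP; rewrite -[_ == _]/(row_free _) -kermx_eq0; apply/negPn/negP.
  case/rowV0Pn => v /sub_kermxP v0 vn0.
  have := hV v vn0; rewrite -key v0 /qf mul0mx mul0mx mxE ltxx //.
move=> x x0 /submxP [z ez]; rewrite ez key; apply: hV.
by apply/eqP => z0; move: x0; rewrite ez z0 mul0mx eqxx.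
Qed.

End Embed.

Section Lin.
Variable n : nat.
Implicit Types (u v x : 'rV[algC]_n) (A B : 'M[algC]_n).

Definition lin v x := \sum_i x 0 i * v 0 i.
Definition dq v x := \sum_i v 0 i * (x 0 i * (x 0 i)^*).

Lemma linE v x : (x *m v^T) 0 0 = lin v x.
Proof. by rewrite mxE; apply: eq_bigr => i _; rewrite mxE. Qed.

Lemma qfD A B x : qf (A + B) x = qf A x + qf B x.
Proof. by rewrite /qf mulmxDr mulmxDl mxE. Qed.
Lemma qfN A x : qf (- A) x = - qf A x.
Proof. by rewrite /qf mulmxN mulNmx mxE. Qed.
Lemma qfB A B x : qf (A - B) x = qf A x - qf B x.
Proof. by rewrite qfD qfN. Qed.
Lemma qfZ c A x : qf (c *: A) x = c * qf A x.
Proof. by rewrite /qf -scalemxAr -scalemxAl mxE. Qed.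

Lemma qf_outer u v x : (forall i, (v 0 i)^* = v 0 i) -> qf (u^T *m v) x = lin u x * (lin v x)^*.
Proof.
move=> vr; rewrite /qf !mulmxA -(mulmxA (x *m u^T)) mxE big_ord1 linE; congr (_ * _).
rewrite mxE rmorph_sum; apply: eq_bigr => i _; rewrite !mxE rmorphM /= mulrC.
by rewrite vr.
Qed.

Lemma qf_dq v x : qf (diag_mx v) x = dq v x.
Proof. by rewrite qf_diag. Qed.

Lemma dq_ge0 v x : (forall i, 0 <= v 0 i) -> 0 <= dq v x.
Proof. by move=> h; apply: sumr_ge0 => i _; apply: mulr_ge0 => //; exact: mul_conjC_ge0. Qed.

Lemma linD u v x : lin (u + v) x = lin u x + lin v x.
Proof. by rewrite /lin -big_split; apply: eq_bigr => i _; rewrite mxE mulrDr. Qed.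
Lemma linZ c v x : lin (c *: v) x = c * lin v x.
Proof. by rewrite /lin mulr_sumr; apply: eq_bigr => i _; rewrite mxE mulrCA. Qed.
Lemma linN v x : lin (- v) x = - lin v x.
Proof. by rewrite -scaleN1r linZ mulN1r. Qed.
Lemma dqD u v x : dq (u + v) x = dq u x + dq v x.
Proof. by rewrite /dq -big_split; apply: eq_bigr => i _; rewrite mxE mulrDl. Qed.
End Lin.

Section K.
Variables (n h : nat).
Hypotheses (h3 : (3 <= h)%N) (hn : (h <= n - 1)%N).
Let K := @Khn n h.

Lemma n0 : (0 < n)%N. Proof. lia. Qed.
Let o0 : 'I_n := Ordinal n0.

Lemma K_simple : simple_graph K.
Proof.
split.
  move=> i j; rewrite /K /Khn eq_sym; congr (_ && _).
  by case: ((i:nat) < h)%N; case: ((j:nat) < h)%N; case: ((i:nat) == 0)%N; case: ((j:nat) == 0)%N.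
by move=> i; rewrite /K /Khn eqxx.
Qed.

Lemma K_dist i j : distmx K i j = (if i == j then 0 else if K i j then 1 else 2)%:R.
Proof.
rewrite mxE; case: eqP => [-> | /eqP ij]; first by rewrite gdist0.
case kij : (K i j); first by rewrite gdist1.
rewrite (@gdist2 _ _ _ _ o0) //; first lia.
- by rewrite kij.
- move: kij; rewrite /K /Khn ij /= -val_eqE /= eqxx !orbT andbT => hf.
  by apply: contraFN hf => /eqP ->; rewrite eqxx !orbT.
- move: kij; rewrite /K /Khn ij /= -val_eqE /= eqxx !orbT andbT => hf.
  by rewrite eq_sym; apply: contraFN hf => /eqP ->; rewrite eqxx !orbT.
Qed.

Definition one : 'rV[algC]_n := const_mx 1.
Definition qv : 'rV[algC]_n := \row_i ((i : nat) != 0%N)%:R.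
Definition pv : 'rV[algC]_n := \row_i (h <= i)%N%:R.

Lemma outerE m (u v : 'rV[algC]_m) i j : (u^T *m v) i j = u 0 i * v 0 j.
Proof. by rewrite mxE big_ord1 !mxE. Qed.

Lemma K_formula : distmx K =
  one^T *m one - 1%:M + qv^T *m pv + pv^T *m qv - pv^T *m pv - diag_mx pv.
Proof.
apply/matrixP => i j; rewrite K_dist !mxE !big_ord1 !mxE.
have hi : (h <= i)%N -> (i : nat) != 0%N by move=> ?; apply/eqP; lia.
have hj : (h <= j)%N -> (j : nat) != 0%N by move=> ?; apply/eqP; lia.
case: (i =P j) => [<- | /eqP ij].
  move: hi; case: (h <= i)%N; case: ((i : nat) == 0%N) => hi //=;
  try (by have := hi isT); rewrite ?mulr1n ?mulr0n; ring.
rewrite /K /Khn ij /= !ltnNge; move: hi hj.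
case: (h <= i)%N; case: (h <= j)%N; case: ((i : nat) == 0%N); case: ((j : nat) == 0%N) => hi hj //=;
  try (by have := hi isT); try (by have := hj isT); rewrite ?mulr1n ?mulr0n; ring.
Qed.

Definition e0v : 'rV[algC]_n := \row_i ((i : nat) == 0%N)%:R.

Lemma K_qf (a b : algC) x :
  qf (a *: distmx K + b%:M) x =
  a * (lin one x * (lin one x)^* - dq one x + lin qv x * (lin pv x)^* +
       lin pv x * (lin qv x)^* - lin pv x * (lin pv x)^* - dq pv x) + b * dq one x.
Proof.
have r1 : forall i, (one 0 i)^* = one 0 i by move=> i; rewrite mxE conjC1.
have rq : forall i, (qv 0 i)^* = qv 0 i by move=> i; rewrite mxE conjC_nat.
have rp : forall i, (pv 0 i)^* = pv 0 i by move=> i; rewrite mxE conjC_nat.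
rewrite qfD qfZ K_formula !qfB !qfD !qf_outer // qfN -[b%:M]scalemx1 qfZ.
by rewrite -diag_const_mx !qf_dq.
Qed.

Lemma lin_e0 x : lin e0v x = x 0 o0.
Proof.
rewrite /lin (bigD1 o0) //= big1 ?addr0; first by rewrite mxE eqxx mulr1.
move=> i io; rewrite mxE (_ : ((i : nat) == 0%N) = false) ?mulr0 //.
by apply: contraNF io => /eqP e; apply/eqP/val_inj.
Qed.

Lemma dq_e0 x : dq e0v x = x 0 o0 * (x 0 o0)^*.
Proof.
rewrite /dq (bigD1 o0) //= big1 ?addr0; first by rewrite mxE eqxx mul1r.
move=> i io; rewrite mxE (_ : ((i : nat) == 0%N) = false) ?mul0r //.
by apply: contraNF io => /eqP e; apply/eqP/val_inj.
Qed.

Lemma one_split : one = e0v + qv.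
Proof. by apply/rowP => i; rewrite !mxE; case: ((i : nat) == 0%N); rewrite /= ?addr0 ?add0r. Qed.

Lemma one_split2 : one = pv + (one - pv).
Proof. by rewrite addrC subrK. Qed.

Lemma nneg_nat (u : 'rV[algC]_n) (f : 'I_n -> nat) : u = \row_i (f i)%:R -> forall i, 0 <= u 0 i.
Proof. by move=> -> i; rewrite mxE ler0n. Qed.

Lemma KA x : x *m (e0v + 2 *: qv)^T = 0 -> qf (2 *: distmx K + 1%:M) x <= 0.
Proof.
move=> ex0'; have ex0 := congr1 (fun M : 'M[algC]_(1,1) => M 0 0) ex0'; move: ex0; rewrite /= linE mxE linD linZ lin_e0 => ex0.
have ex : x 0 o0 = - (2 * lin qv x) by rewrite -[LHS]subr0 -ex0; ring.
rewrite K_qf [in lin one x]one_split linD lin_e0 [in dq one x]one_split dqD dq_e0.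
rewrite !(rmorphD, rmorphN, rmorphM) /= ex !(rmorphD, rmorphN, rmorphM) /= conjC1.
have qn := dq_ge0 x (nneg_nat (erefl qv)).
have pn := dq_ge0 x (nneg_nat (erefl pv)).
have dn := mul_conjC_ge0 (lin qv x - lin pv x).
set Q := lin qv x in qn pn dn *; set P := lin pv x in qn pn dn *.
rewrite rmorphB /= in dn.
apply: (le_trans (y := - (2 * ((Q - P) * (Q^* - P^*)) + dq qv x + 2 * dq pv x))).
  by rewrite le_eqVlt; apply/orP; left; apply/eqP; ring.
rewrite oppr_le0; apply: addr_ge0; [apply: addr_ge0 => //|]; apply: mulr_ge0 => //.
Qed.

Lemma lin0 (v x : 'rV[algC]_n) : x *m v^T = 0 -> lin v x = 0.
Proof. by move=> e; rewrite -linE e mxE. Qed.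

Lemma KB x : x *m row_mx pv^T one^T = 0 -> qf (1 *: distmx K + 1%:M) x <= 0.
Proof.
rewrite mul_mx_row => /eqP; rewrite row_mx_eq0 => /andP [/eqP /lin0 eP /eqP /lin0 eS].
rewrite K_qf eP eS rmorph0 /=.
apply: (le_trans (y := - dq pv x)).
  by rewrite le_eqVlt; apply/orP; left; apply/eqP; ring.
by rewrite oppr_le0; apply: dq_ge0; exact: (nneg_nat (erefl pv)).
Qed.

Lemma KC x : x *m (qv - pv)^T = 0 -> qf ((-1) *: distmx K + (-2)%:M) x <= 0.
Proof.
move=> /lin0; rewrite linD linN => /eqP; rewrite subr_eq0 => /eqP eQ.
rewrite K_qf eQ [in dq one x]one_split2 dqD.
have pn : 0 <= dq (one - pv) x.
  apply: dq_ge0 => i; rewrite !mxE; case: (h <= i)%N; rewrite ?subrr ?subr0 ?ler01 ?lexx //.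
have sn := mul_conjC_ge0 (lin one x).
have qn := mul_conjC_ge0 (lin pv x).
apply: (le_trans (y := - (lin one x * (lin one x)^* + lin pv x * (lin pv x)^* + dq (one - pv) x))).
  by rewrite le_eqVlt; apply/orP; left; apply/eqP; ring.
by rewrite oppr_le0; apply: addr_ge0 => //; apply: addr_ge0.
Qed.

End K.

Lemma C4tab a b : dHnat C4 a b = nth 0%N (nth [::] [:: [:: 0; 1; 2; 1]; [:: 1; 0; 1; 2]; [:: 2; 1; 0; 1]; [:: 1; 2; 1; 0]] a) b.
Proof. by case: a b => [[|[|[|[|//]]]] ?] [[|[|[|[|//]]]] ?]. Qed.

Lemma C4calc : mkV 2 4 [:: [:: -2; 0; -1; 2]; [:: -1; 1; 0; 1]] *m (2 *: DH C4 + 1%:M) *m (mkV 2 4 [:: [:: -2; 0; -1; 2]; [:: -1; 1; 0; 1]])^T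
  = diag_mx (\row_i (nth 0 [:: 1; 3] i)%:~R).
Proof.
apply/matrixP => i j; rewrite !mxE.
rewrite !big_ord_recr !big_ord0 /= !mxE.
rewrite !big_ord_recr !big_ord0 /= !mxE /= !C4tab.
by case: i j => [[|[|//]] ?] [[|[|//]] ?] /=; rewrite ?mulr1n ?mulr0n; ring.
Qed.

Lemma C4_U n (g : rel 'I_n) : simple_graph g -> (2 < n)%N -> induced_sub C4 g ->
  exists U : 'M[algC]_(2, n), \rank U = 2 /\
    forall x, x != 0 -> (x <= U)%MS -> 0 < qf (2 *: distmx g + 1%:M) x.
Proof.
move=> gs n2 [f [finj fH]]; apply: (G_side n2 finj fH).
  by apply: diam_mk; vm_compute.
apply: (H_side (mkV_real _ _ _) C4calc).
by case => [[|[|//]] ?] /=; rewrite mxE /= ltr0z.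
Qed.

Lemma C5tab a b : dHnat C5 a b = nth 0%N (nth [::] [:: [:: 0; 1; 2; 2; 1]; [:: 1; 0; 1; 2; 2]; [:: 2; 1; 0; 1; 2]; [:: 2; 2; 1; 0; 1]; [:: 1; 2; 2; 1; 0]] a) b.
Proof. by case: a b => [[|[|[|[|[|//]]]]] ?] [[|[|[|[|[|//]]]]] ?]. Qed.

Lemma C5calc : mkV 2 5 [:: [:: -2; -2; 0; 1; 2]; [:: -2; 0; 1; 1; -1]] *m ((-1) *: DH C5 + (-2)%:M) *m (mkV 2 5 [:: [:: -2; -2; 0; 1; 2]; [:: -2; 0; 1; 1; -1]])^T
  = diag_mx (\row_i (nth 0 [:: 2; 2] i)%:~R).
Proof.
apply/matrixP => i j; rewrite !mxE.
rewrite !big_ord_recr !big_ord0 /= !mxE.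
rewrite !big_ord_recr !big_ord0 /= !mxE /= !C5tab.
by case: i j => [[|[|//]] ?] [[|[|//]] ?] /=; rewrite ?mulr1n ?mulr0n; ring.
Qed.

Lemma C5_U n (g : rel 'I_n) : simple_graph g -> (2 < n)%N -> induced_sub C5 g ->
  exists U : 'M[algC]_(2, n), \rank U = 2 /\
    forall x, x != 0 -> (x <= U)%MS -> 0 < qf ((-1) *: distmx g + (-2)%:M) x.
Proof.
move=> gs n2 [f [finj fH]]; apply: (G_side n2 finj fH).
  by apply: diam_mk; vm_compute.
apply: (H_side (mkV_real _ _ _) C5calc).
by case => [[|[|//]] ?] /=; rewrite mxE /= ltr0z.
Qed.

Lemma H1tab a b : dHnat H1 a b = nth 0%N (nth [::] [:: [:: 0; 1; 2; 2; 1]; [:: 1; 0; 1; 2; 1]; [:: 2; 1; 0; 1; 1]; [:: 2; 2; 1; 0; 1]; [:: 1; 1; 1; 1; 0]] a) b.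
Proof. by case: a b => [[|[|[|[|[|//]]]]] ?] [[|[|[|[|[|//]]]]] ?]. Qed.

Lemma H1calc : mkV 2 5 [:: [:: -2; -2; 1; 0; 0]; [:: -1; 2; -2; 2; -2]] *m (2 *: DH H1 + 1%:M) *m (mkV 2 5 [:: [:: -2; -2; 1; 0; 0]; [:: -1; 2; -2; 2; -2]])^T
  = diag_mx (\row_i (nth 0 [:: 1; 1] i)%:~R).
Proof.
apply/matrixP => i j; rewrite !mxE.
rewrite !big_ord_recr !big_ord0 /= !mxE.
rewrite !big_ord_recr !big_ord0 /= !mxE /= !H1tab.
by case: i j => [[|[|//]] ?] [[|[|//]] ?] /=; rewrite ?mulr1n ?mulr0n; ring.
Qed.

Lemma H1_U n (g : rel 'I_n) : simple_graph g -> (2 < n)%N -> induced_sub H1 g ->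
  exists U : 'M[algC]_(2, n), \rank U = 2 /\
    forall x, x != 0 -> (x <= U)%MS -> 0 < qf (2 *: distmx g + 1%:M) x.
Proof.
move=> gs n2 [f [finj fH]]; apply: (G_side n2 finj fH).
  by apply: diam_mk; vm_compute.
apply: (H_side (mkV_real _ _ _) H1calc).
by case => [[|[|//]] ?] /=; rewrite mxE /= ltr0z.
Qed.

Lemma H4tab a b : dHnat H4 a b = nth 0%N (nth [::] [:: [:: 0; 1; 2; 1; 2]; [:: 1; 0; 1; 1; 1]; [:: 2; 1; 0; 2; 2]; [:: 1; 1; 2; 0; 1]; [:: 2; 1; 2; 1; 0]] a) b.
Proof. by case: a b => [[|[|[|[|[|//]]]]] ?] [[|[|[|[|[|//]]]]] ?]. Qed.

Lemma H4calc : mkV 3 5 [:: [:: -2; -2; -2; 2; 1]; [:: -2; 0; -1; 2; 0]; [:: -1; -2; 0; 2; 0]] *m (1 *: DH H4 + 1%:M) *m (mkV 3 5 [:: [:: -2; -2; -2; 2; 1]; [:: -2; 0; -1; 2; 0]; [:: -1; -2; 0; 2; 0]])^T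
  = diag_mx (\row_i (nth 0 [:: 1; 1; 1] i)%:~R).
Proof.
apply/matrixP => i j; rewrite !mxE.
rewrite !big_ord_recr !big_ord0 /= !mxE.
rewrite !big_ord_recr !big_ord0 /= !mxE /= !H4tab.
by case: i j => [[|[|[|//]]] ?] [[|[|[|//]]] ?] /=; rewrite ?mulr1n ?mulr0n; ring.
Qed.

Lemma H4_U n (g : rel 'I_n) : simple_graph g -> (2 < n)%N -> induced_sub H4 g ->
  exists U : 'M[algC]_(3, n), \rank U = 3 /\
    forall x, x != 0 -> (x <= U)%MS -> 0 < qf (1 *: distmx g + 1%:M) x.
Proof.
move=> gs n2 [f [finj fH]]; apply: (G_side n2 finj fH).
  by apply: diam_mk; vm_compute.
apply: (H_side (mkV_real _ _ _) H4calc).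
by case => [[|[|[|//]]] ?] /=; rewrite mxE /= ltr0z.
Qed.

Lemma H9tab a b : dHnat H9 a b = nth 0%N (nth [::] [:: [:: 0; 1; 1; 1; 1]; [:: 1; 0; 1; 1; 1]; [:: 1; 1; 0; 1; 2]; [:: 1; 1; 1; 0; 1]; [:: 1; 1; 2; 1; 0]] a) b.
Proof. by case: a b => [[|[|[|[|[|//]]]]] ?] [[|[|[|[|[|//]]]]] ?]. Qed.

Lemma H9calc : mkV 2 5 [:: [:: -2; -2; 2; -1; 2]; [:: -2; 0; -2; 0; 1]] *m (2 *: DH H9 + 1%:M) *m (mkV 2 5 [:: [:: -2; -2; 2; -1; 2]; [:: -2; 0; -2; 0; 1]])^T
  = diag_mx (\row_i (nth 0 [:: 1; 1] i)%:~R).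
Proof.
apply/matrixP => i j; rewrite !mxE.
rewrite !big_ord_recr !big_ord0 /= !mxE.
rewrite !big_ord_recr !big_ord0 /= !mxE /= !H9tab.
by case: i j => [[|[|//]] ?] [[|[|//]] ?] /=; rewrite ?mulr1n ?mulr0n; ring.
Qed.

Lemma H9_U n (g : rel 'I_n) : simple_graph g -> (2 < n)%N -> induced_sub H9 g ->
  exists U : 'M[algC]_(2, n), \rank U = 2 /\
    forall x, x != 0 -> (x <= U)%MS -> 0 < qf (2 *: distmx g + 1%:M) x.
Proof.
move=> gs n2 [f [finj fH]]; apply: (G_side n2 finj fH).
  by apply: diam_mk; vm_compute.
apply: (H_side (mkV_real _ _ _) H9calc).
by case => [[|[|//]] ?] /=; rewrite mxE /= ltr0z.
Qed.

Lemma H10tab a b : dHnat H10 a b = nth 0%N (nth [::] [:: [:: 0; 1; 1; 1; 1]; [:: 1; 0; 1; 1; 1]; [:: 1; 1; 0; 2; 2]; [:: 1; 1; 2; 0; 2]; [:: 1; 1; 2; 2; 0]] a) b.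
Proof. by case: a b => [[|[|[|[|[|//]]]]] ?] [[|[|[|[|[|//]]]]] ?]. Qed.

Lemma H10calc : mkV 2 5 [:: [:: -2; 0; -2; 0; 1]; [:: 0; -2; 2; 1; 0]] *m (2 *: DH H10 + 1%:M) *m (mkV 2 5 [:: [:: -2; 0; -2; 0; 1]; [:: 0; -2; 2; 1; 0]])^T
  = diag_mx (\row_i (nth 0 [:: 1; 1] i)%:~R).
Proof.
apply/matrixP => i j; rewrite !mxE.
rewrite !big_ord_recr !big_ord0 /= !mxE.
rewrite !big_ord_recr !big_ord0 /= !mxE /= !H10tab.
by case: i j => [[|[|//]] ?] [[|[|//]] ?] /=; rewrite ?mulr1n ?mulr0n; ring.
Qed.

Lemma H10_U n (g : rel 'I_n) : simple_graph g -> (2 < n)%N -> induced_sub H10 g ->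
  exists U : 'M[algC]_(2, n), \rank U = 2 /\
    forall x, x != 0 -> (x <= U)%MS -> 0 < qf (2 *: distmx g + 1%:M) x.
Proof.
move=> gs n2 [f [finj fH]]; apply: (G_side n2 finj fH).
  by apply: diam_mk; vm_compute.
apply: (H_side (mkV_real _ _ _) H10calc).
by case => [[|[|//]] ?] /=; rewrite mxE /= ltr0z.
Qed.

Lemma H11tab a b : dHnat H11 a b = nth 0%N (nth [::] [:: [:: 0; 1; 1; 1; 1; 1]; [:: 1; 0; 1; 1; 1; 1]; [:: 1; 1; 0; 1; 1; 2]; [:: 1; 1; 1; 0; 1; 2]; [:: 1; 1; 1; 1; 0; 2]; [:: 1; 1; 2; 2; 2; 0]] a) b.
Proof. by case: a b => [[|[|[|[|[|[|//]]]]]] ?] [[|[|[|[|[|[|//]]]]]] ?]. Qed.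

Lemma H11calc : mkV 2 6 [:: [:: 1; 1; 1; 1; 1; 1]; [:: 185; 185; -49; -49; -49; -127]] *m (2 *: DH H11 + 1%:M) *m (mkV 2 6 [:: [:: 1; 1; 1; 1; 1; 1]; [:: 185; 185; -49; -49; -49; -127]])^T
  = diag_mx (\row_i (nth 0 [:: 78; 1326] i)%:~R).
Proof.
apply/matrixP => i j; rewrite !mxE.
rewrite !big_ord_recr !big_ord0 /= !mxE.
rewrite !big_ord_recr !big_ord0 /= !mxE /= !H11tab.
by case: i j => [[|[|//]] ?] [[|[|//]] ?] /=; rewrite ?mulr1n ?mulr0n; ring.
Qed.

Lemma H11_U n (g : rel 'I_n) : simple_graph g -> (2 < n)%N -> induced_sub H11 g ->
  exists U : 'M[algC]_(2, n), \rank U = 2 /\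
    forall x, x != 0 -> (x <= U)%MS -> 0 < qf (2 *: distmx g + 1%:M) x.
Proof.
move=> gs n2 [f [finj fH]]; apply: (G_side n2 finj fH).
  by apply: diam_mk; vm_compute.
apply: (H_side (mkV_real _ _ _) H11calc).
by case => [[|[|//]] ?] /=; rewrite mxE /= ltr0z.
Qed.

Lemma H12tab a b : dHnat H12 a b = nth 0%N (nth [::] [:: [:: 0; 1; 1; 1; 1; 1]; [:: 1; 0; 1; 1; 1; 1]; [:: 1; 1; 0; 1; 2; 2]; [:: 1; 1; 1; 0; 2; 2]; [:: 1; 1; 2; 2; 0; 1]; [:: 1; 1; 2; 2; 1; 0]] a) b.
Proof. by case: a b => [[|[|[|[|[|[|//]]]]]] ?] [[|[|[|[|[|[|//]]]]]] ?]. Qed.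

Lemma H12calc : mkV 2 6 [:: [:: -2; -2; 0; 1; 2; 2]; [:: -2; -1; 2; 0; -2; -2]] *m (2 *: DH H12 + 1%:M) *m (mkV 2 6 [:: [:: -2; -2; 0; 1; 2; 2]; [:: -2; -1; 2; 0; -2; -2]])^T
  = diag_mx (\row_i (nth 0 [:: 1; 1] i)%:~R).
Proof.
apply/matrixP => i j; rewrite !mxE.
rewrite !big_ord_recr !big_ord0 /= !mxE.
rewrite !big_ord_recr !big_ord0 /= !mxE /= !H12tab.
by case: i j => [[|[|//]] ?] [[|[|//]] ?] /=; rewrite ?mulr1n ?mulr0n; ring.
Qed.

Lemma H12_U n (g : rel 'I_n) : simple_graph g -> (2 < n)%N -> induced_sub H12 g ->
  exists U : 'M[algC]_(2, n), \rank U = 2 /\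
    forall x, x != 0 -> (x <= U)%MS -> 0 < qf (2 *: distmx g + 1%:M) x.
Proof.
move=> gs n2 [f [finj fH]]; apply: (G_side n2 finj fH).
  by apply: diam_mk; vm_compute.
apply: (H_side (mkV_real _ _ _) H12calc).
by case => [[|[|//]] ?] /=; rewrite mxE /= ltr0z.
Qed.

Lemma H13tab a b : dHnat H13 a b = nth 0%N (nth [::] [:: [:: 0; 1; 1; 1; 1; 1]; [:: 1; 0; 1; 2; 2; 2]; [:: 1; 1; 0; 2; 2; 2]; [:: 1; 2; 2; 0; 1; 2]; [:: 1; 2; 2; 1; 0; 2]; [:: 1; 2; 2; 2; 2; 0]] a) b.
Proof. by case: a b => [[|[|[|[|[|[|//]]]]]] ?] [[|[|[|[|[|[|//]]]]]] ?]. Qed.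

Lemma H13calc : mkV 2 6 [:: [:: -2; -2; -2; 1; 1; 2]; [:: -2; -1; -1; 2; 2; -2]] *m ((-1) *: DH H13 + (-2)%:M) *m (mkV 2 6 [:: [:: -2; -2; -2; 1; 1; 2]; [:: -2; -1; -1; 2; 2; -2]])^T
  = diag_mx (\row_i (nth 0 [:: 2; 2] i)%:~R).
Proof.
apply/matrixP => i j; rewrite !mxE.
rewrite !big_ord_recr !big_ord0 /= !mxE.
rewrite !big_ord_recr !big_ord0 /= !mxE /= !H13tab.
by case: i j => [[|[|//]] ?] [[|[|//]] ?] /=; rewrite ?mulr1n ?mulr0n; ring.
Qed.

Lemma H13_U n (g : rel 'I_n) : simple_graph g -> (2 < n)%N -> induced_sub H13 g ->
  exists U : 'M[algC]_(2, n), \rank U = 2 /\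
    forall x, x != 0 -> (x <= U)%MS -> 0 < qf ((-1) *: distmx g + (-2)%:M) x.
Proof.
move=> gs n2 [f [finj fH]]; apply: (G_side n2 finj fH).
  by apply: diam_mk; vm_compute.
apply: (H_side (mkV_real _ _ _) H13calc).
by case => [[|[|//]] ?] /=; rewrite mxE /= ltr0z.
Qed.

Lemma herm_dist n (g : rel 'I_n) : symmetric g -> distmx g \is hermsymmx.
Proof.
move=> gs; apply/is_hermitianmxP; rewrite expr0 scale1r.
by apply/matrixP => i j; rewrite !mxE conjC_nat gdist_sym.
Qed.

Lemma final n (A B : 'M[algC]_n) (HA : A \is hermsymmx) (HB : B \is hermsymmx)
  (cp : char_poly A = char_poly B) (a b : algC) (ar : a \is Num.real) (br : b \is Num.real)
  r p (L : 'M[algC]_(n, r))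
  (HK : forall x, x *m L = 0 -> qf (a *: B + b%:M) x <= 0)
  (U : 'M[algC]_(p, n)) (rU : \rank U = p)
  (hU : forall x, x != 0 -> (x <= U)%MS -> 0 < qf (a *: A + b%:M) x)
  (rp : (r < p)%N) : False.
Proof.
set SK := [set i | 0 < a * spectral_diag B 0 i + b].
set SA := [set i | 0 < a * spectral_diag A 0 i + b].
set SA' := [set i | ~~ (0 < a * spectral_diag A 0 i + b)].
have c1 : (#|SK| + \rank (kermx L) <= n)%N.
  apply: (count_weak HB (a := a) (b := b)); first by move=> i; rewrite inE.
  by move=> x /sub_kermxP xk; exact: HK xk.
have rk := mxrank_ker L; have rl := rank_leq_col L.
have tr : #|SA| = #|SK| by apply: (transfer (fun v => 0 < a * v + b)).
have c2 : (#|SA'| + \rank U <= n)%N.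
  apply: (count_strict HA (a := a) (b := b)) => //; move=> i; rewrite inE => hi.
  have dr : spectral_diag A 0 i \is Num.real.
    by have /mxOverP := hermitian_spectral_diag_real HA; apply.
  by rewrite real_leNgt ?rpred0 // rpredD // rpredM.
have cc : (#|SA| + #|SA'| = n)%N.
  have -> : SA' = ~: SA by apply/setP => i; rewrite !inE.
  by rewrite cardsC card_ord.
have := rank_leq_row L; lia.
Qed.

Lemma lemma3p1_aux (n h : nat) (g : rel 'I_n) :
  (3 <= h)%N -> (h <= n - 1)%N ->
  simple_graph g -> connected_graph g ->
  D_cospectral g (@Khn n h) ->
  ~ induced_sub C4 g /\ ~ induced_sub C5 g /\ ~ induced_sub H1 g /\
  ~ induced_sub H4 g /\ ~ induced_sub H9 g /\ ~ induced_sub H10 g /\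
  ~ induced_sub H11 g /\ ~ induced_sub H12 g /\ ~ induced_sub H13 g.
Proof.
move=> h3 hn gs _ cp.
have n2 : (2 < n)%N by lia.
have HG := herm_dist gs.1.
have HK := herm_dist (@K_simple n h).1.
have r2 : (2 : algC) \is Num.real by rewrite realn.
have r1 : (1 : algC) \is Num.real by rewrite real1.
have rm1 : (-1 : algC) \is Num.real by rewrite rpredN real1.
have rm2 : (-2 : algC) \is Num.real by rewrite rpredN realn.
have FA := final HG HK cp r2 r1 (@KA n h h3 hn).
have FB := final HG HK cp r1 r1 (@KB n h h3 hn).
have FC := final HG HK cp rm1 rm2 (@KC n h h3 hn).
split; first by move=> /(C4_U gs n2) [U [rU hU]]; exact: FA rU hU _.
split; first by move=> /(C5_U gs n2) [U [rU hU]]; exact: FC rU hU _.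
split; first by move=> /(H1_U gs n2) [U [rU hU]]; exact: FA rU hU _.
split; first by move=> /(H4_U gs n2) [U [rU hU]]; exact: FB rU hU _.
split; first by move=> /(H9_U gs n2) [U [rU hU]]; exact: FA rU hU _.
split; first by move=> /(H10_U gs n2) [U [rU hU]]; exact: FA rU hU _.
split; first by move=> /(H11_U gs n2) [U [rU hU]]; exact: FA rU hU _.
split; first by move=> /(H12_U gs n2) [U [rU hU]]; exact: FA rU hU _.
by move=> /(H13_U gs n2) [U [rU hU]]; exact: FC rU hU _.
Qed.

Local Close Scope sesquilinear_scope.
Local Close Scope ring_scope.

Theorem lemma3p1 (n h : nat) (g : rel 'I_n) :
  3 <= h -> h <= n - 1 ->
  simple_graph g -> connected_graph g ->
  D_cospectral g (@Khn n h) ->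
  ~ induced_sub C4 g /\ ~ induced_sub C5 g /\ ~ induced_sub H1 g /\
  ~ induced_sub H4 g /\ ~ induced_sub H9 g /\ ~ induced_sub H10 g /\
  ~ induced_sub H11 g /\ ~ induced_sub H12 g /\ ~ induced_sub H13 g.
Proof. exact: lemma3p1_aux. Qed.
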